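(* Assume $\theta_i<1$ for all $i$ and $\theta_j>0$ for some $j$. Suppose $\mathcal G(C)$ is a star topology with center node $l$ and $\theta_l=0$. Then the equilibrium social power $x^*$ of systems (A) and (B) is unique and satisfies: (i) $x^*\in\operatorname{int}\Delta_n$; (ii) $x^*_i=1/n$ for every $i\in\mathcal V_f\setminus\{l\}$; (iii) for every $i\in\mathcal V_p$, $x^*_i=\dfrac{n-\sqrt{n^2-4n\theta_i(1-\theta_i)}}{2n\theta_i}<\dfrac1n$, and this expression is strictly decreasing in $\theta_i\in(0,1)$; (iv) $x^*_l=\dfrac1n+\dfrac1n\sum_{j\in\mathcal V_p}\dfrac{\theta_j(1-x^*_j)}{1-\theta_jx^*_j}>\dfrac1n$.
   Context: Let $n\ge 2$, $\mathbf 1_n$ the all-ones vector, $I_n$ the identity matrix, $\Delta_n=\{x\in\mathbb R^n: x\ge 0,\ \mathbf 1_n^Tx=1\}$, $\operatorname{int}\Delta_n=\{x\in\mathbb R^n: x>0,\ \mathbf 1_n^Tx=1\}$. Let $C\in\mathbb R^{n\times n}$ be a nonnegative row-stochastic matrix with zero diagonal, and $\mathcal G(C)$ the digraph on $\{1,\dots,n\}$ with an edge $(i,j)$ iff $C_{ij}>0$. $\mathcal G(C)$ is a star topology with center node $l$ if every edge of $\mathcal G(C)$ is either from $l$ or to $l$ (i.e. $C_{ij}>0$ implies $i=l$ or $j=l$). Let $\theta=(\theta_1,\dots,\theta_n)\in[0,1]^n$, $\Theta=\mathrm{diag}(\theta)$, $W(x)=\mathrm{diag}(x)+(I_n-\mathrm{diag}(x))C$.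 Let $\mathcal V_f=\{i:\theta_i=0\}$ and $\mathcal V_p=\{i:\theta_i>0\}$. System (A): $x(s+1)=F(x(s))$, $x(0)\in\Delta_n$, where $F(x)=(I_n-\Theta)(I_n-W(x)^T\Theta)^{-1}\mathbf 1_n/n$; an equilibrium is $x^*\in\Delta_n$ with $F(x^* )=x^*$. System (B): $V(k+1)=\Theta W(x(k))V(k)+I_n-\Theta$, $x(k+1)=V(k+1)^T\mathbf 1_n/n$, with $V(0)=I_n$, $x(0)\in\Delta_n$; an equilibrium is a pair $(V^*,x^* )$ with $V^*$ row-stochastic, $x^*\in\Delta_n$, $V^*=\Theta W(x^* )V^*+I_n-\Theta$, $x^*=(V^* )^T\mathbf 1_n/n$. The equilibrium social powers of (A) and (B) coincide (the fixed points of $F$). *)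

(* Defs.v *)
(* R is an arbitrary real closed field (has square roots). *)
From HB Require Import structures.
From mathcomp Require Import all_boot all_order all_algebra.
Set Implicit Arguments. Unset Strict Implicit. Unset Printing Implicit Defensive.
Import Order.TTheory GRing.Theory Num.Theory.
Local Open Scope ring_scope.

Section Defs.
Variable R : rcfType.
Variable n : nat.

Definition stoch_zero_diag (C : 'M[R]_n) : Prop :=
  (forall i j, 0 <= C i j) /\ (forall i, \sum_j C i j = 1) /\ (forall i, C i i = 0).

Definition star_topology (C : 'M[R]_n) (l : 'I_n) : Prop :=
  forall i j, 0 < C i j -> i = l \/ j = l.

Definition simplex (x : 'cV[R]_n) : Prop :=
  (forall i, 0 <= x i 0) /\ \sum_i x i 0 = 1.
Definition int_simplex (x : 'cV[R]_n) : Prop :=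
  (forall i, 0 < x i 0) /\ \sum_i x i 0 = 1.

Definition Theta (theta : 'I_n -> R) : 'M[R]_n := diag_mx (\row_i theta i).

Definition Wmx (C : 'M[R]_n) (x : 'cV[R]_n) : 'M[R]_n :=
  diag_mx x^T + (1%:M - diag_mx x^T) *m C.

Definition ones_n : 'cV[R]_n := const_mx (n%:R^-1).

Definition Fden (theta : 'I_n -> R) (C : 'M[R]_n) (x : 'cV[R]_n) : 'M[R]_n :=
  1%:M - (Wmx C x)^T *m Theta theta.

Definition Fmap (theta : 'I_n -> R) (C : 'M[R]_n) (x : 'cV[R]_n) : 'cV[R]_n :=
  (1%:M - Theta theta) *m invmx (Fden theta C x) *m ones_n.

Definition equilibriumA (theta : 'I_n -> R) (C : 'M[R]_n) (x : 'cV[R]_n) : Prop :=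
  simplex x /\ Fden theta C x \in unitmx /\ Fmap theta C x = x.

Definition row_stochastic (V : 'M[R]_n) : Prop :=
  (forall i j, 0 <= V i j) /\ (forall i, \sum_j V i j = 1).

Definition equilibriumB (theta : 'I_n -> R) (C : 'M[R]_n)
    (V : 'M[R]_n) (x : 'cV[R]_n) : Prop :=
  row_stochastic V /\ simplex x /\
  V = Theta theta *m Wmx C x *m V + (1%:M - Theta theta) /\
  x = V^T *m ones_n.

End Defs.

Definition xp (R : rcfType) (n : nat) (t : R) : R :=
  (n%:R - Num.sqrt (n%:R ^+ 2 - 4 * n%:R * t * (1 - t))) / (2 * n%:R * t).

(* Main.v *)
Require Import Defs.
From HB Require Import structures.
From mathcomp Require Import all_boot all_order all_algebra.
From mathcomp Require Import ring lra.
Import Order.TTheory GRing.Theory Num.Theory.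
Local Open Scope ring_scope.

Lemma xp_gen (R : rcfType) (N t S r a : R) : 2 <= N -> 0 < t -> t < 1 -> 0 <= S ->
  S ^+ 2 = N ^+ 2 - 4 * N * t * (1 - t) -> r * (2 * N * t) = N - S -> a * N = 1 ->
  [/\ 0 < r, r < a & r - t * r ^+ 2 = a * (1 - t)].
Proof.
move=> N2 t0 t1 S0 SE rE aE.
have q : 0 < N * t * (1 - t) by apply: mulr_gt0; nra.
have SN : S < N.
  rewrite ltNge; apply/negP => H.
  have : N ^+ 2 <= S ^+ 2 by nra.
  lra.
have Nt : 0 < 2 * N * t by nra.
have r0 : 0 < r by nra.
have a0 : 0 < a by nra.
split => //.
  have H : N - 2 * t < S.
    rewrite ltNge; apply/negP => H.
    have : S ^+ 2 <= (N - 2 * t) ^+ 2 by nra.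
    nra.
  have : r * (2 * N * t) < 2 * t by lra.
  have : r * N < 1 by nra.
  nra.
have : (r - t * r ^+ 2 - a * (1 - t)) * (2 * N * t) ^+ 2 = 0.
  have -> : (r - t * r ^+ 2 - a * (1 - t)) * (2 * N * t) ^+ 2 =
     (r * (2 * N * t)) * (2 * N * t) - t * (r * (2 * N * t)) ^+ 2 - (a * N) * ((1 - t) * 4 * N * t ^+ 2) by ring.
  rewrite rE aE.
  have -> : (N - S) * (2 * N * t) - t * (N - S) ^+ 2 - 1 * ((1 - t) * 4 * N * t ^+ 2)
     = t * (N ^+ 2 - S ^+ 2) - (1 - t) * 4 * N * t ^+ 2 by ring.
  rewrite SE; ring.
move/eqP; rewrite mulf_eq0 subr_eq0 => /orP [/eqP //|].
rewrite expf_eq0 /= gt_eqF //.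
Qed.

Lemma qu_gen (R : rcfType) (t y r a : R) : 0 < t -> t < 1 -> 0 <= y -> y <= 1 ->
  0 < a -> a * 2 <= 1 -> 0 < r -> r < a ->
  r - t * r ^+ 2 = a * (1 - t) -> y - t * y ^+ 2 = a * (1 - t) -> y = r.
Proof.
move=> t0 t1 y0 y1 a0 a2 r0 ra rE yE.
have : (y - r) * (1 - t * (y + r)) = 0.
  have -> : (y - r) * (1 - t * (y + r)) = (y - t * y ^+ 2) - (r - t * r ^+ 2) by ring.
  by rewrite rE yE subrr.
move/eqP; rewrite mulf_eq0 => /orP [|/eqP H]; first by rewrite subr_eq0 => /eqP.
exfalso.
have : t * y + t * r = 1 by lra.
have : t * y <= t by nra.
have : t * r < r by nra.
nra.
Qed.

Lemma mono_gen (R : rcfType) (t1 t2 r1 r2 a : R) : 0 < t1 -> t1 < t2 -> t2 < 1 ->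
  0 < a -> a * 2 <= 1 -> 0 < r1 -> r1 < a -> 0 < r2 -> r2 < a ->
  r1 - t1 * r1 ^+ 2 = a * (1 - t1) -> r2 - t2 * r2 ^+ 2 = a * (1 - t2) -> r2 < r1.
Proof.
move=> t10 t12 t21 a0 a2 r10 r1a r20 r2a E1 E2.
rewrite ltNge; apply/negP => H.
have F1 : t1 * (a - r1 ^+ 2) = a - r1 by lra.
have F2 : t2 * (a - r2 ^+ 2) = a - r2 by lra.
have p1 : 0 < a - r1 ^+ 2 by nra.
have p2 : 0 < a - r2 ^+ 2 by nra.
have K : (a - r2) * (a - r1 ^+ 2) - (a - r1) * (a - r2 ^+ 2) =
   (r1 - r2) * (a * (1 - r1 - r2) + r1 * r2) by ring.
have K2 : 0 <= a * (1 - r1 - r2) + r1 * r2 by nra.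
have K3 : (a - r2) * (a - r1 ^+ 2) <= (a - r1) * (a - r2 ^+ 2) by nra.
rewrite -F1 -F2 in K3.
have : t2 * ((a - r2 ^+ 2) * (a - r1 ^+ 2)) <= t1 * ((a - r2 ^+ 2) * (a - r1 ^+ 2)) by nra.
have pp : 0 < (a - r2 ^+ 2) * (a - r1 ^+ 2) by nra.
nra.
Qed.

Lemma xp_facts (R : rcfType) (n : nat) (t : R) : (2 <= n)%N -> 0 < t -> t < 1 ->
  [/\ 0 < xp n t, xp n t < n%:R^-1 & xp n t - t * (xp n t) ^+ 2 = n%:R^-1 * (1 - t)].
Proof.
move=> n2 t0 t1.
have N2 : (2 : R) <= n%:R by rewrite (ler_nat R 2 n).
have D0 : 0 <= n%:R ^+ 2 - 4 * n%:R * t * (1 - t) :> R by nra.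
apply: (@xp_gen R n%:R t (Num.sqrt (n%:R ^+ 2 - 4 * n%:R * t * (1 - t))) (xp n t) (n%:R^-1) N2 t0 t1 (sqrtr_ge0 _)).
- by rewrite sqr_sqrtr.
- rewrite /xp divfK // mulf_neq0 // ?mulf_neq0 // ?gt_eqF //; lra.
- by rewrite mulVf // gt_eqF //; lra.
Qed.

Lemma sum_delta (R : rcfType) (n : nat) (i : 'I_n) (F : 'I_n -> R) :
  \sum_j (j == i)%:R * F j = F i.
Proof.
rewrite (bigD1 i) //= eqxx mul1r big1 ?addr0 // => k /negbTE ->; by rewrite mul0r.
Qed.

Section Main.
Variables (R : rcfType) (n : nat) (C : 'M[R]_n) (theta : 'I_n -> R) (l : 'I_n).
Hypothesis n2 : (2 <= n)%N.
Hypothesis HC : stoch_zero_diag C.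
Hypothesis Hth : forall i, 0 <= theta i /\ theta i < 1.
Hypothesis Hstar : star_topology C l.
Hypothesis Hl : theta l = 0.

Local Notation a := (n%:R^-1 : R).

Lemma Cstar i j : i != l -> C i j = (j == l)%:R.
Proof.
move=> il; case: HC => C0 [Csum _].
have Z : forall k, k != l -> C i k = 0.
  move=> k kl; apply/eqP; rewrite eq_le C0 andbT leNgt; apply/negP => /Hstar [] /eqP.
  - by rewrite (negbTE il).
  - by rewrite (negbTE kl).
case: eqVneq => [->|jl]; last by rewrite Z.
have := Csum i; rewrite (bigD1 l) //= big1 ?addr0 // => k; exact: Z.
Qed.

Lemma Wmx_entry y i j : Wmx C y i j = (i == j)%:R * y i 0 + (1 - y i 0) * C i j.
Proof.
rewrite /Wmx mulmxBl mul1mx mul_diag_mx !mxE.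
by case: eqP => _ /=; ring.
Qed.

Lemma K1 y j i : theta j * Wmx C y j i =
  theta j * ((j == i)%:R * y j 0 + (1 - y j 0) * (i == l)%:R).
Proof.
rewrite Wmx_entry; case: (eqVneq j l) => [->|jl]; first by rewrite Hl !mul0r.
by rewrite Cstar.
Qed.


Section Gen.
Variables (y : 'cV[R]_n) (W : 'M[R]_n).
Hypothesis KW : forall j i, theta j * W j i =
  theta j * ((j == i)%:R * y j 0 + (1 - y j 0) * (i == l)%:R).

Lemma Fden_mul_gen (z : 'cV[R]_n) i : ((1%:M - W^T *m Theta theta) *m z) i 0 =
  z i 0 - theta i * y i 0 * z i 0 - (i == l)%:R * \sum_j theta j * (1 - y j 0) * z j 0.
Proof.
rewrite mulmxBl mul1mx -mulmxA /Theta mul_diag_mx !mxE.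
under eq_bigr => j _ do rewrite !mxE mulrA (mulrC _ (theta j)) KW.
have E : forall j, theta j * ((j == i)%:R * y j 0 + (1 - y j 0) * (i == l)%:R) * z j 0
   = (j == i)%:R * (theta j * y j 0 * z j 0) + (i == l)%:R * (theta j * (1 - y j 0) * z j 0).
  by move=> j; ring.
rewrite (eq_bigr _ (fun j _ => E j)) big_split /= -mulr_sumr sum_delta; ring.
Qed.

Lemma vD_entry_gen (v : 'rV[R]_n) j : (v *m (1%:M - W^T *m Theta theta)) 0 j =
  v 0 j - theta j * y j 0 * v 0 j - theta j * (1 - y j 0) * v 0 l.
Proof.
rewrite mulmxBr mulmx1 /Theta mul_mx_diag !mxE.
under eq_bigr => i _ do rewrite !mxE (mulrC _ (theta j)) KW.
have E : forall i, v 0 i * (theta j * ((j == i)%:R * y j 0 + (1 - y j 0) * (i == l)%:R))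
   = (i == j)%:R * (theta j * y j 0 * v 0 j) + (i == l)%:R * (theta j * (1 - y j 0) * v 0 l).
  move=> i; case: (eqVneq i j) => [->|ij].
    by rewrite ?eqxx; case: (eqVneq j l) => [->|_] /=; ring.
  by rewrite ?(eq_sym j i) ?(negbTE ij); case: (eqVneq i l) => [->|_] /=; ring.
rewrite (eq_bigr _ (fun i _ => E i)) big_split /= !sum_delta; ring.
Qed.

Lemma TWV_gen (M : 'M[R]_n) i j : (Theta theta *m W *m M) i j =
  theta i * y i 0 * M i j + theta i * (1 - y i 0) * M l j.
Proof.
rewrite /Theta mul_diag_mx !mxE.
under eq_bigr => k _ do rewrite !mxE KW.
have E : forall k, theta i * ((i == k)%:R * y i 0 + (1 - y i 0) * (k == l)%:R) * M k j
   = (k == i)%:R * (theta i * y i 0 * M i j) + (k == l)%:R * (theta i * (1 - y i 0) * M l j).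
  move=> k; case: (eqVneq k i) => [->|ki].
    by rewrite ?eqxx; case: (eqVneq i l) => [->|_] /=; ring.
  by rewrite ?(eq_sym i k) ?(negbTE ki); case: (eqVneq k l) => [->|_] /=; ring.
by rewrite (eq_bigr _ (fun k _ => E k)) big_split /= !sum_delta.
Qed.
End Gen.

Lemma Fden_mul (y : 'cV[R]_n) (z : 'cV[R]_n) i : (Fden theta C y *m z) i 0 =
  z i 0 - theta i * y i 0 * z i 0 - (i == l)%:R * \sum_j theta j * (1 - y j 0) * z j 0.
Proof. exact: (@Fden_mul_gen y (Wmx C y) (K1 y) z i). Qed.

Lemma vD_entry (y : 'cV[R]_n) (v : 'rV[R]_n) j : (v *m Fden theta C y) 0 j =
  v 0 j - theta j * y j 0 * v 0 j - theta j * (1 - y j 0) * v 0 l.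
Proof. exact: (@vD_entry_gen y (Wmx C y) (K1 y) v j). Qed.

Lemma TWV (y : 'cV[R]_n) (M : 'M[R]_n) i j : (Theta theta *m Wmx C y *m M) i j =
  theta i * y i 0 * M i j + theta i * (1 - y i 0) * M l j.
Proof. exact: (@TWV_gen y (Wmx C y) (K1 y) M i j). Qed.

Lemma Fden_unit (y : 'cV[R]_n) : (forall j, theta j * y j 0 != 1) -> Fden theta C y \in unitmx.
Proof.
move=> Hy; rewrite unitmxE unitfE; apply/det0P => -[v vn0 vD].
move/eqP: vn0; apply; apply/matrixP => i j; rewrite (ord1 i) !mxE.
have Ej : (v *m Fden theta C y) 0 j = 0 by rewrite vD mxE.
have El : (v *m Fden theta C y) 0 l = 0 by rewrite vD mxE.
rewrite !vD_entry Hl !mul0r !subr0 in Ej El.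
rewrite El mulr0 subr0 in Ej.
move: Ej; rewrite -{1}(mul1r (v 0 j)) -mulrBl => /eqP; rewrite mulf_eq0 subr_eq0 eq_sym.
by rewrite (negbTE (Hy j)) /= => /eqP.
Qed.

Lemma IT_mul (z : 'cV[R]_n) i : ((1%:M - Theta theta) *m z) i 0 = (1 - theta i) * z i 0.
Proof. by rewrite mulmxBl mul1mx /Theta mul_diag_mx !mxE; ring. Qed.

Lemma IT_entry i j : (1%:M - Theta theta) i j = (i == j)%:R * (1 - theta i).
Proof. rewrite /Theta !mxE; case: eqP => _ /=; ring. Qed.


Lemma addE (A B : 'M[R]_n) i j : (A + B) i j = A i j + B i j.
Proof. by rewrite mxE. Qed.

Lemma a_pos : 0 < a.
Proof. by rewrite invr_gt0 ltr0n; case: n n2. Qed.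

Lemma a_half : a * 2 <= 1.
Proof.
have N2 : (2 : R) <= n%:R by rewrite (ler_nat R 2 n).
have N0 : (0 : R) < n%:R by lra.
have an : a * n%:R = 1 by rewrite mulVf // gt_eqF.
have := a_pos; nra.
Qed.

Lemma nR0 : n%:R != 0 :> R.
Proof. by rewrite pnatr_eq0; case: n n2. Qed.

Definition T (y : 'cV[R]_n) i := theta i * (1 - y i 0) / (1 - theta i * y i 0).
Definition Phi (y : 'cV[R]_n) : 'cV[R]_n :=
  \col_j (if j == l then a + a * \sum_i T y i else a * (1 - theta j) / (1 - theta j * y j 0)).
Definition Vexp (y : 'cV[R]_n) : 'M[R]_n := \matrix_(i, j)
  (if i == l then (j == l)%:R else
     ((i == j)%:R * (1 - theta i) + (j == l)%:R * (theta i * (1 - y i 0))) / (1 - theta i * y i 0)).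

Lemma Vexp_entry (y : 'cV[R]_n) i j : Vexp y i j = (if i == l then (j == l)%:R else
     ((i == j)%:R * (1 - theta i) + (j == l)%:R * (theta i * (1 - y i 0))) / (1 - theta i * y i 0)).
Proof. by rewrite mxE. Qed.

Lemma Tl (y : 'cV[R]_n) : T y l = 0.
Proof. by rewrite /T Hl !mul0r. Qed.

Lemma simplex_bounds (y : 'cV[R]_n) : simplex y -> forall i, 0 <= y i 0 /\ y i 0 <= 1.
Proof.
move=> [y0 ys] i; split => //; rewrite -ys (bigD1 i) //= lerDl.
by apply: sumr_ge0 => j _.
Qed.

Lemma den_pos (y : 'cV[R]_n) i : 0 <= y i 0 -> y i 0 <= 1 -> 0 < 1 - theta i * y i 0.
Proof. move=> h0 h1; have [t0 t1] := Hth i; nra. Qed.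

Lemma A_FP (y : 'cV[R]_n) : equilibriumA theta C y -> y = Phi y.
Proof.
move=> [ys [U F]].
have dp : forall i, 1 - theta i * y i 0 != 0.
  by move=> i; have [h0 h1] := @simplex_bounds y ys i; rewrite gt_eqF // den_pos.
set z := invmx (Fden theta C y) *m (ones_n R n).
have Dz : Fden theta C y *m z = (ones_n R n) by rewrite /z mulmxA mulmxV // mul1mx.
have yz : forall i, y i 0 = (1 - theta i) * z i 0.
  move=> i; have : Fmap theta C y i 0 = y i 0 by rewrite F.
  by rewrite /Fmap -mulmxA IT_mul => <-.
set S := \sum_j theta j * (1 - y j 0) * z j 0.
have Dzi : forall i, a = z i 0 - theta i * y i 0 * z i 0 - (i == l)%:R * S.
  move=> i; have := congr1 (fun M : 'cV[R]_n => M i 0) Dz.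
  by rewrite /= Fden_mul [ones_n R n _ _]mxE => <-.
have zi : forall i, i != l -> z i 0 = a / (1 - theta i * y i 0).
  move=> i il; have := Dzi i; rewrite (negbTE il) mul0r subr0 => ->.
  by field; rewrite ?dp ?nR0.
apply/matrixP => j k; rewrite (ord1 k) mxE.
case: (eqVneq j l) => [->|jl].
  rewrite yz Hl subr0 mul1r.
  have := Dzi l; rewrite eqxx Hl !mul0r subr0 mul1r => Ha.
  have -> : z l 0 = a + S by rewrite Ha; ring.
  congr (_ + _); rewrite /S mulr_sumr; apply: eq_bigr => i _.
  case: (eqVneq i l) => [->|il]; first by rewrite Tl Hl !mul0r mulr0.
  by rewrite zi // /T; ring.
by rewrite {1}yz zi //; field; rewrite ?dp ?nR0.
Qed.

Lemma FP_A (y : 'cV[R]_n) : simplex y -> y = Phi y -> equilibriumA theta C y.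
Proof.
move=> ys E; split => //.
have dpos : forall i, 0 < 1 - theta i * y i 0.
  by move=> i; have [h0 h1] := @simplex_bounds y ys i; rewrite den_pos.
have dp : forall i, 1 - theta i * y i 0 != 0 by move=> i; rewrite gt_eqF.
have Ei : forall i, y i 0 = Phi y i 0 by move=> i; rewrite -E.
have U : Fden theta C y \in unitmx.
  apply: Fden_unit => j; have := dpos j; rewrite subr_gt0 => h.
  by rewrite lt_eqF.
split => //.
set z : 'cV[R]_n := \col_i (if i == l then y l 0 else a / (1 - theta i * y i 0)).
have HS : \sum_j theta j * (1 - y j 0) * z j 0 = a * \sum_j T y j.
  rewrite mulr_sumr; apply: eq_bigr => j _; rewrite /z mxE.
  case: (eqVneq j l) => [->|jl]; first by rewrite Tl Hl !mul0r mulr0.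
  by rewrite /T; field; rewrite ?dp ?nR0.
have Dz : Fden theta C y *m z = (ones_n R n).
  apply/matrixP => i k; rewrite (ord1 k) Fden_mul HS [ones_n R n _ _]mxE /z mxE.
  case: (eqVneq i l) => [->|il].
    by rewrite [in LHS]Ei mxE eqxx Hl /=; ring.
  by rewrite /=; field; rewrite ?dp ?nR0.
rewrite /Fmap -Dz -mulmxA mulKmx //.
apply/matrixP => i k; rewrite (ord1 k) IT_mul /z mxE.
case: (eqVneq i l) => [->|il]; first by rewrite Hl; ring.
by rewrite [RHS]Ei mxE (negbTE il); field; rewrite ?dp ?nR0.
Qed.


Lemma VT (y : 'cV[R]_n) : (Vexp y)^T *m ones_n R n = Phi y.
Proof.
apply/matrixP => j k; rewrite (ord1 k) !mxE.
under eq_bigr => i _ do rewrite !mxE.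
case: (eqVneq j l) => [->|jl].
  have E : forall i, (if i == l then true%:R else
     ((i == l)%:R * (1 - theta i) + true%:R * (theta i * (1 - y i 0))) / (1 - theta i * y i 0)) * a
     = (i == l)%:R * a + a * T y i.
    move=> i; case: (eqVneq i l) => [->|il] /=; first by rewrite Tl; ring.
    by rewrite /T; ring.
  by rewrite (eq_bigr _ (fun i _ => E i)) big_split /= sum_delta -mulr_sumr.
have E : forall i, (if i == l then false%:R else
     ((i == j)%:R * (1 - theta i) + false%:R * (theta i * (1 - y i 0))) / (1 - theta i * y i 0)) * a
     = (i == j)%:R * (a * (1 - theta j) / (1 - theta j * y j 0)).
  move=> i; case: (eqVneq i l) => [->|il] /=.
    by rewrite eq_sym (negbTE jl) /=; ring.
  case: (eqVneq i j) => [->|ij] /=; ring.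
by rewrite (eq_bigr _ (fun i _ => E i)) sum_delta.
Qed.

Lemma Vexp_eq (y : 'cV[R]_n) : simplex y ->
  Vexp y = Theta theta *m Wmx C y *m Vexp y + (1%:M - Theta theta).
Proof.
move=> ys; apply/matrixP => i j; rewrite addE TWV IT_entry !Vexp_entry eqxx.
case: (eqVneq i l) => [->|il] /=; first by rewrite Hl eq_sym; ring.
have [h0 h1] := @simplex_bounds y ys i.
have dp : 1 - theta i * y i 0 != 0 by rewrite gt_eqF // den_pos.
by field; rewrite dp.
Qed.

Lemma Vexp_stoch (y : 'cV[R]_n) : simplex y -> row_stochastic (Vexp y).
Proof.
move=> ys; split.
  move=> i j; rewrite Vexp_entry; case: eqVneq => _ /=; first exact: ler0n.
  have [h0 h1] := @simplex_bounds y ys i; have [t0 t1] := Hth i.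
  apply: divr_ge0; last by apply: ltW; apply: den_pos.
  by apply: addr_ge0; apply: mulr_ge0 => //; rewrite ?ler0n //; nra.
move=> i; have [->|il] := eqVneq i l.
  under eq_bigr do rewrite Vexp_entry eqxx /=.
  transitivity (\sum_j (j == l)%:R * (1:R)); first by apply: eq_bigr => j _; rewrite mulr1.
  exact: (@sum_delta R n l (fun _ => 1)).
under eq_bigr do rewrite Vexp_entry (negbTE il).
have [h0 h1] := @simplex_bounds y ys i.
have dp : 1 - theta i * y i 0 != 0 by rewrite gt_eqF // den_pos.
have E : forall j, ((i == j)%:R * (1 - theta i) + (j == l)%:R * (theta i * (1 - y i 0))) / (1 - theta i * y i 0)
  = (j == i)%:R * ((1 - theta i) / (1 - theta i * y i 0)) + (j == l)%:R * (theta i * (1 - y i 0) / (1 - theta i * y i 0)).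
  by move=> j; rewrite (eq_sym i j); ring.
rewrite (eq_bigr _ (fun j _ => E j)) big_split /= !sum_delta.
by field; rewrite dp.
Qed.

Lemma B_V V (y : 'cV[R]_n) : equilibriumB theta C V y -> V = Vexp y.
Proof.
move=> [Vs [ys [VE xE]]].
have VEij : forall i j, V i j = theta i * y i 0 * V i j + theta i * (1 - y i 0) * V l j
   + (i == j)%:R * (1 - theta i).
  by move=> i j; rewrite {1}VE addE TWV IT_entry.
have Vl : forall j, V l j = (j == l)%:R.
  by move=> j; rewrite {1}VEij Hl eq_sym; ring.
apply/matrixP => i j; rewrite Vexp_entry; case: (eqVneq i l) => [->|il] /=; first exact: Vl.
have [h0 h1] := @simplex_bounds y ys i.
have dp : 1 - theta i * y i 0 != 0 by rewrite gt_eqF // den_pos.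
have K : V i j * (1 - theta i * y i 0) =
   (i == j)%:R * (1 - theta i) + (j == l)%:R * (theta i * (1 - y i 0)).
  by rewrite -Vl mulrBr mulr1 {1}VEij; ring.
by rewrite -K mulfK.
Qed.

Lemma B_FP V (y : 'cV[R]_n) : equilibriumB theta C V y -> y = Phi y.
Proof.
move=> h; have := h => -[_ [_ [_ xE]]].
by rewrite {1}xE (@B_V V y h) VT.
Qed.

Lemma FP_B (y : 'cV[R]_n) : simplex y -> y = Phi y -> equilibriumB theta C (Vexp y) y.
Proof.
move=> ys E; split; first exact: Vexp_stoch.
split => //; split; first exact: Vexp_eq.
by rewrite VT.
Qed.


Definition bb i := if 0 < theta i then xp n (theta i) else a.
Definition xs : 'cV[R]_n := \col_i (if i == l then
   a + a * \sum_j theta j * (1 - bb j) / (1 - theta j * bb j) else bb i).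

Lemma bb_facts i : [/\ 0 < bb i, bb i <= a & bb i - theta i * bb i ^+ 2 = a * (1 - theta i)].
Proof.
rewrite /bb; case: ifP => tp.
  have [t0 t1] := Hth i; have [h1 h2 h3] := @xp_facts R n (theta i) n2 tp t1.
  by split => //; apply: ltW.
have [t0 t1] := Hth i.
have -> : theta i = 0 by apply/eqP; rewrite eq_le t0 andbT leNgt tp.
by split; rewrite ?a_pos //; ring.
Qed.

Lemma bb_den i : 0 < 1 - theta i * bb i.
Proof.
have [h1 h2 _] := bb_facts i; have := a_half; have := a_pos.
have [t0 t1] := Hth i; move=> *; nra.
Qed.

Lemma xs_nl i : i != l -> xs i 0 = bb i.
Proof. by move=> il; rewrite mxE (negbTE il). Qed.

Lemma sumT_xs : \sum_j T xs j = \sum_j theta j * (1 - bb j) / (1 - theta j * bb j).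
Proof.
apply: eq_bigr => j _; case: (eqVneq j l) => [->|jl].
  by rewrite Tl Hl !mul0r.
by rewrite /T xs_nl.
Qed.

Lemma xs_l : xs l 0 = a + a * \sum_j T xs j.
Proof. by rewrite sumT_xs mxE eqxx. Qed.

Lemma sum_bb_ge0 : 0 <= \sum_j theta j * (1 - bb j) / (1 - theta j * bb j).
Proof.
apply: sumr_ge0 => j _; have [h1 h2 _] := bb_facts j; have := a_half; have := a_pos.
have [t0 t1] := Hth j; move=> *.
apply: divr_ge0; last exact: ltW (bb_den j).
apply: mulr_ge0 => //; lra.
Qed.

Lemma xs_pos i : 0 < xs i 0.
Proof.
case: (eqVneq i l) => [->|il]; last by rewrite xs_nl //; case: (bb_facts i).
rewrite mxE eqxx; have := sum_bb_ge0; have := a_pos; move=> *.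
apply: ltr_wpDr => //; exact: mulr_ge0 (ltW a_pos) _.
Qed.

Lemma bb_eq i : bb i = a * (1 - theta i) / (1 - theta i * bb i).
Proof.
have [_ _ E] := bb_facts i; have d := bb_den i.
by rewrite -E; field; rewrite gt_eqF // nR0.
Qed.

Lemma xs_sum : \sum_i xs i 0 = 1.
Proof.
have E : forall i, xs i 0 = (i == l)%:R * (xs l 0 - a) + a - a * T xs i.
  move=> i; case: (eqVneq i l) => [->|il] /=; first by rewrite Tl; ring.
  rewrite /T xs_nl //; have [_ _ Eb] := bb_facts i; have d := bb_den i.
  apply/eqP; rewrite -subr_eq0.
  have -> : bb i - (false%:R * (xs l 0 - a) + a - a * (theta i * (1 - bb i) / (1 - theta i * bb i)))
    = ((bb i - theta i * bb i ^+ 2) - a * (1 - theta i)) / (1 - theta i * bb i).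
    by rewrite /=; field; rewrite gt_eqF // nR0.
  by rewrite Eb subrr mul0r.
rewrite (eq_bigr _ (fun i _ => E i)).
rewrite big_split big_split /= sum_delta sumrN -mulr_sumr sumr_const card_ord.
have -> : a *+ n = 1 by rewrite -[_ *+ n]mulr_natr mulVf ?nR0.
rewrite xs_l; ring.
Qed.

Lemma xs_simplex : simplex xs.
Proof. by split; [move=> i; apply: ltW; apply: xs_pos | exact: xs_sum]. Qed.

Lemma xs_FP : xs = Phi xs.
Proof.
apply/matrixP => j k; rewrite (ord1 k) [RHS]mxE.
case: (eqVneq j l) => [->|jl]; first exact: xs_l.
by rewrite xs_nl // {1}bb_eq.
Qed.

Lemma uniq_FP (y : 'cV[R]_n) : simplex y -> y = Phi y -> y = xs.
Proof.
move=> ys E.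
have Ey : forall j, y j 0 = Phi y j 0 by move=> j; rewrite -E.
have yb : forall j, j != l -> y j 0 = bb j.
  move=> j jl; have [h0 h1] := @simplex_bounds y ys j; have d := @den_pos y j h0 h1.
  have Y : y j 0 - theta j * y j 0 ^+ 2 = a * (1 - theta j).
    have -> : y j 0 - theta j * y j 0 ^+ 2 = y j 0 * (1 - theta j * y j 0) by ring.
    by rewrite {1}Ey mxE (negbTE jl) divfK // gt_eqF.
  have [t0 t1] := Hth j.
  rewrite /bb; case: ifP => tp.
    have [r0 ra rE] := @xp_facts R n (theta j) n2 tp t1.
    exact: (@qu_gen R (theta j) (y j 0) (xp n (theta j)) a tp t1 h0 h1 a_pos a_half r0 ra rE Y).
  have th : theta j = 0 by apply/eqP; rewrite eq_le t0 andbT leNgt tp.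
  by move: Y; rewrite th !mul0r subr0 subr0 mulr1.
apply/matrixP => j k; rewrite (ord1 k).
case: (eqVneq j l) => [->|jl]; last by rewrite yb // xs_nl.
rewrite Ey mxE eqxx xs_l; congr (_ + _ * _); apply: eq_bigr => i _.
case: (eqVneq i l) => [->|il]; first by rewrite !Tl.
by rewrite /T yb // xs_nl.
Qed.


Lemma main_sec : (exists j, 0 < theta j) ->
  exists xs : 'cV[R]_n,
    (equilibriumA theta C xs /\ (forall y, equilibriumA theta C y -> y = xs)) /\
    ((exists V, equilibriumB theta C V xs) /\
     (forall V y, equilibriumB theta C V y -> y = xs)) /\
    int_simplex xs /\
    (forall i, theta i = 0 -> i != l -> xs i 0 = n%:R^-1) /\
    (forall i, 0 < theta i ->
       xs i 0 = xp n (theta i) /\ xp n (theta i) < n%:R^-1) /\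
    (forall t1 t2 : R, 0 < t1 -> t1 < t2 -> t2 < 1 -> xp n t2 < xp n t1) /\
    xs l 0 = n%:R^-1 + n%:R^-1 *
       (\sum_(j | 0 < theta j) theta j * (1 - xs j 0) / (1 - theta j * xs j 0)) /\
    n%:R^-1 < xs l 0.
Proof.
move=> [j0 tj0].
have nl : forall i, 0 < theta i -> i != l.
  by move=> i ti; apply/eqP => E; rewrite E Hl ltxx in ti.
exists xs; split; [split|split; [split|split; [|split; [|split; [|split; [|split]]]]]].
- exact: FP_A xs_simplex xs_FP.
- move=> y h; apply: uniq_FP; [exact: h.1 | exact: A_FP].
- by exists (Vexp xs); apply: FP_B; [exact: xs_simplex | exact: xs_FP].
- move=> V y h; apply: uniq_FP; [exact: h.2.1 | exact: (@B_FP V y h)].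
- by split; [exact: xs_pos | exact: xs_sum].
- by move=> i ti il; rewrite xs_nl // /bb ti ltxx.
- move=> i ti; rewrite xs_nl ?nl // /bb ti; split => //.
  have [_ t1] := Hth i; by case: (@xp_facts R n (theta i) n2 ti t1).
- move=> t1 t2 h1 h12 h2.
  have [r10 r1a r1E] := @xp_facts R n t1 n2 h1 (lt_trans h12 h2).
  have [r20 r2a r2E] := @xp_facts R n t2 n2 (lt_trans h1 h12) h2.
  exact: (@mono_gen R t1 t2 _ _ a h1 h12 h2 a_pos a_half r10 r1a r20 r2a r1E r2E).
- rewrite mxE eqxx [in RHS]big_mkcond /=; congr (_ + _ * _); apply: eq_bigr => j _.
  case: ifP => tp; first by rewrite xs_nl ?nl.
  have [t0 _] := Hth j.
  have -> : theta j = 0 by apply/eqP; rewrite eq_le t0 andbT leNgt tp.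
  by rewrite !mul0r.
- rewrite xs_l sumT_xs -[X in X < _]addr0 ltrD2l; apply: mulr_gt0; first exact: a_pos.
  rewrite (bigD1 j0) //=; apply: ltr_pwDl; last first.
    apply: sumr_ge0 => j _; have [h1 h2 _] := bb_facts j; have := a_half; have := a_pos.
    have [t0 t1] := Hth j; move=> *.
    apply: divr_ge0; last exact: ltW (bb_den j).
    apply: mulr_ge0 => //; lra.
  have [h1 h2 _] := bb_facts j0; have := a_half; have := a_pos; move=> *.
  apply: divr_gt0; last exact: bb_den j0.
  apply: mulr_gt0 => //; lra.
Qed.

End Main.

Theorem theorem2 (R : rcfType) (n : nat) (C : 'M[R]_n) (theta : 'I_n -> R)
    (l : 'I_n) :
  (2 <= n)%N ->
  stoch_zero_diag C ->
  (forall i, 0 <= theta i /\ theta i < 1) ->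
  (exists j, 0 < theta j) ->
  star_topology C l ->
  theta l = 0 ->
  exists xs : 'cV[R]_n,
    (* xs is the unique equilibrium social power of system (A) *)
    (equilibriumA theta C xs /\ (forall y, equilibriumA theta C y -> y = xs)) /\
    (* xs is the unique equilibrium social power of system (B) *)
    ((exists V, equilibriumB theta C V xs) /\
     (forall V y, equilibriumB theta C V y -> y = xs)) /\
    (* (i) *)
    int_simplex xs /\
    (* (ii) *)
    (forall i, theta i = 0 -> i != l -> xs i 0 = n%:R^-1) /\
    (* (iii) *)
    (forall i, 0 < theta i ->
       xs i 0 = xp n (theta i) /\ xp n (theta i) < n%:R^-1) /\
    (forall t1 t2 : R, 0 < t1 -> t1 < t2 -> t2 < 1 -> xp n t2 < xp n t1) /\
    (* (iv) *)
    xs l 0 = n%:R^-1 + n%:R^-1 *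
       (\sum_(j | 0 < theta j) theta j * (1 - xs j 0) / (1 - theta j * xs j 0)) /\
    n%:R^-1 < xs l 0.
Proof.
move=> n2 HC Hth hj Hstar Hl.
exact: (@main_sec R n C theta l n2 HC Hth Hstar Hl hj).
Qed.
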